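(* Induced subposets of c.i.-posets are c.i.-posets: if $P$ is a c.i.-poset and $Q$ is a poset admitting an injective map $i:Q\to P$ with $i(q)\le_Pi(q')$ if and only if $q\le_Qq'$, then $Q$ is a c.i.-poset.
   Context: All posets are finite. For a finite poset $P$, a connected order ideal is a nonempty downward-closed subset whose induced Hasse diagram is connected; $\mathcal{J}_{\mathrm{conn}}(P)$ denotes the set of these; two connected order ideals intersect nontrivially if they are neither disjoint nor nested, and $\Pi(P)$ is the set of such unordered pairs. $P$ is a c.i.-poset if $|\mathcal{J}_{\mathrm{conn}}(P)|-|\Pi(P)|=|P|$; equivalently, for any field $k$, the presentation of the ring $R_P$ (the span in $k[x_p:p\in P]$ of the monomials $\prod_px_p^{f(p)}$ over $f:P\to\mathbb{N}$ with $f(p)\ge f(p')$ whenever $p<_Pp'$) as the quotient of $k[U_J]_{J\in\mathcal{J}_{\mathrm{conn}}(P)}$ via $U_J\mapsto\prod_{p\in J}x_p$ is a complete intersection presentation; equivalently, every connected order ideal of $P$ is either principal or nearly principal, where a non-principal connected order ideal $J$ is nearly principal if exactly one pair $\{J_1,J_2\}\in\Pi(P)$ has $J_1\cup J_2=J$. *)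

(* Defs.v *)
From HB Require Import structures.
From mathcomp Require Import all_boot all_order.
Set Implicit Arguments. Unset Strict Implicit. Unset Printing Implicit Defensive.
Import Order.Theory.
Local Open Scope order_scope.

Section CIPoset.
Context {d : Order.disp_t} {T : finPOrderType d}.

Definition covers (x y : T) : bool :=
  (x < y) && [forall z : T, ~~ ((x < z) && (z < y))].

Definition hasse_adj (x y : T) : bool := covers x y || covers y x.

Definition hasse_rel (J : {set T}) : rel T :=
  fun x y => [&& x \in J, y \in J & hasse_adj x y].

Definition hasse_connected (J : {set T}) : bool :=
  [forall x in J, forall y in J, connect (hasse_rel J) x y].

Definition down_closed (J : {set T}) : bool :=
  [forall x : T, forall y in J, (x <= y) ==> (x \in J)].

Definition conn_ideal (J : {set T}) : bool :=
  [&& J != set0, down_closed J & hasse_connected J].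

Definition Jconn : {set {set T}} := [set J : {set T} | conn_ideal J].

Definition intersect_nontriv (J1 J2 : {set T}) : bool :=
  [&& ~~ [disjoint J1 & J2], ~~ (J1 \subset J2) & ~~ (J2 \subset J1)].

Definition Pi : {set {set {set T}}} :=
  [set [set J1; J2] | J1 in Jconn, J2 in Jconn & intersect_nontriv J1 J2].

(* |J_conn(P)| - |Pi(P)| = |P|, stated without truncated subtraction *)
Definition ci_poset : Prop := #|Jconn| = #|Pi| + #|T|.

End CIPoset.
Arguments ci_poset {d} T.

(* Main.v *)
Require Import Defs.
From HB Require Import structures.
From mathcomp Require Import all_boot all_order.
Import Order.Theory.
Local Open Scope order_scope.
Set Implicit Arguments. Unset Strict Implicit. Unset Printing Implicit Defensive.

Section Gen.
Context {d : Order.disp_t} {T : finPOrderType d}.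
Implicit Types (J K A : {set T}) (x y z : T).

Definition dn x : {set T} := [set y | y <= x].
Definition Un (S : {set {set T}}) : {set T} := [set x | [exists J in S, x \in J]].
Definition NP : {set {set T}} := Jconn :\: [set dn x | x : T].

Lemma down_closedP J : reflect (forall x y, y \in J -> x <= y -> x \in J) (down_closed J).
Proof.
apply: (iffP forallP) => [H x y yJ xy | H x].
  by have /forall_inP/(_ y yJ)/implyP := H x; apply.
by apply/forall_inP => y yJ; apply/implyP; apply: H.
Qed.

Lemma hasse_connectedP J :
  reflect (forall x y, x \in J -> y \in J -> connect (hasse_rel J) x y) (hasse_connected J).
Proof.
apply: (iffP forall_inP) => [H x y xJ yJ | H x xJ].
  by have /forall_inP := H x xJ; apply.
by apply/forall_inP => y yJ; apply: H.
Qed.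

Lemma hasse_rel_sym J : symmetric (hasse_rel J).
Proof. by move=> x y; rewrite /hasse_rel /hasse_adj andbCA orbC. Qed.

Lemma hasse_adj_le x y : hasse_adj x y -> (x <= y) || (y <= x).
Proof.
by case/orP => /andP [/ltW -> _] //; rewrite orbT.
Qed.

Lemma conn_mono J K x y : J \subset K -> connect (hasse_rel J) x y -> connect (hasse_rel K) x y.
Proof.
move=> JK; apply: connect_sub => u v /and3P [uJ vJ a]; apply: connect1.
by rewrite /hasse_rel (subsetP JK _ uJ) (subsetP JK _ vJ).
Qed.

Lemma chain_conn J n x y : down_closed J ->
  leq #|[set z | (x <= z) && (z <= y)]| n -> y \in J -> x <= y -> connect (hasse_rel J) x y.
Proof.
move=> /down_closedP dc; elim: n x y => [|n IH] x y.
  rewrite leqn0 => /eqP/cards0_eq/setP/(_ x); rewrite !inE lexx /= => -> //.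
move=> hc yJ; rewrite le_eqVlt => /orP [/eqP -> // | xy].
have xJ : x \in J by apply: dc yJ (ltW xy).
case hcov: (covers x y).
  by apply: connect1; rewrite /hasse_rel xJ yJ /hasse_adj hcov.
move: hcov; rewrite /covers xy /= => /negbT /forallPn [z]; rewrite negbK => /andP [xz zy].
have zJ : z \in J by apply: dc yJ (ltW zy).
apply: (@connect_trans _ _ z).
  apply: (IH x z _ zJ (ltW xz)); rewrite -ltnS; apply: (leq_trans _ hc).
  apply: proper_card; apply/properP; split.
    by apply/subsetP => w; rewrite !inE => /andP [-> wz]; rewrite (le_trans wz (ltW zy)).
  by exists y; rewrite !inE ?(ltW xy) ?lexx //= lt_geF.
apply: (IH z y _ yJ (ltW zy)); rewrite -ltnS; apply: (leq_trans _ hc).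
apply: proper_card; apply/properP; split.
  by apply/subsetP => w; rewrite !inE => /andP [zw ->]; rewrite (le_trans (ltW xz) zw).
by exists x; rewrite !inE ?(ltW xy) ?lexx //= andbT lt_geF.
Qed.

Lemma comp_conn J x y : down_closed J -> x \in J -> y \in J -> (x <= y) || (y <= x) ->
  connect (hasse_rel J) x y.
Proof.
move=> dc xJ yJ /orP [xy | yx]; first exact: chain_conn (leqnn _) yJ xy.
by rewrite sym_connect_sym; [exact: chain_conn (leqnn _) xJ yx | exact: hasse_rel_sym].
Qed.

Lemma dn_conn x : dn x \in Jconn.
Proof.
have dc : down_closed (dn x).
  by apply/down_closedP => u v; rewrite !inE => vx uv; exact: le_trans uv vx.
rewrite inE /conn_ideal dc /=; apply/andP; split.
  by apply/set0Pn; exists x; rewrite inE.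
apply/hasse_connectedP => u v uJ vJ; apply: (@connect_trans _ _ x).
  by apply: comp_conn => //; [rewrite inE | move: uJ; rewrite inE => ->].
by apply: comp_conn => //; [rewrite inE | move: vJ; rewrite inE => ->; rewrite orbT].
Qed.

Lemma union_conn J K a : J \in Jconn -> K \in Jconn -> a \in J -> a \in K -> J :|: K \in Jconn.
Proof.
rewrite !inE => /and3P [_ dJ cJ] /and3P [_ dK cK] aJ aK.
have dc : down_closed (J :|: K).
  apply/down_closedP => u v; rewrite !inE => /orP [vJ|vK] uv.
    by rewrite (down_closedP _ dJ u v vJ uv).
  by rewrite (down_closedP _ dK u v vK uv) orbT.
rewrite /conn_ideal dc /=; apply/andP; split.
  by apply/set0Pn; exists a; rewrite inE aJ.
have ca : forall u, u \in J :|: K -> connect (hasse_rel (J :|: K)) u a.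
  move=> u; rewrite inE => /orP [uJ|uK].
    by apply: conn_mono (subsetUl _ _) _; apply: (hasse_connectedP _ cJ).
  by apply: conn_mono (subsetUr _ _) _; apply: (hasse_connectedP _ cK).
apply/hasse_connectedP => u v uJ vJ; apply: (connect_trans (ca u uJ)).
by rewrite sym_connect_sym; [exact: ca | exact: hasse_rel_sym].
Qed.

Lemma cut J A a b : hasse_connected J -> A \subset J -> a \in A -> b \in J -> b \notin A ->
  exists u v, [/\ u \in A, v \in J, v \notin A & hasse_adj u v].
Proof.
move=> /hasse_connectedP cJ AJ aA bJ bA.
move: (cJ a b (subsetP AJ _ aA) bJ) => /connectP [p].
elim: p a aA => [|c p IH] a aA /=; first by move=> _ eq; rewrite eq aA in bA.
case/andP => /and3P [_ cJc ac] pth eq.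
case cA: (c \in A); first exact: IH pth eq.
by exists a, c; rewrite cA.
Qed.


Lemma PiP S : reflect (exists J1 J2, [/\ J1 \in Jconn, J2 \in Jconn, intersect_nontriv J1 J2
   & S = [set J1; J2]]) (S \in Pi).
Proof.
apply: (iffP imset2P) => [[J1 J2 H1 H2 ->] | [J1 [J2 [H1 H2 H3 ->]]]].
  by move: H2; rewrite in_set => /andP [H2 H3]; exists J1, J2.
by exists J1 J2 => //; rewrite in_set H2 H3.
Qed.

Lemma Un_set2 J K : Un [set J; K] = J :|: K.
Proof.
apply/setP => x; rewrite !inE; apply/existsP/idP => [[L]|/orP [xJ|xK]].
  by rewrite !inE => /andP [/orP [/eqP ->|/eqP ->] ->] //; rewrite orbT.
  by exists J; rewrite !inE eqxx.
by exists K; rewrite !inE eqxx orbT.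
Qed.

Lemma common J K : ~~ [disjoint J & K] -> exists a, (a \in J) && (a \in K).
Proof.
by rewrite -setI_eq0 => /set0Pn [a]; rewrite inE; exists a.
Qed.

Lemma dn_sub J x : down_closed J -> x \in J -> dn x \subset J.
Proof. by move=> /down_closedP dc xJ; apply/subsetP => y; rewrite inE; apply: dc. Qed.

Lemma Un_NP S : S \in Pi -> Un S \in NP.
Proof.
case/PiP => [J1 [J2 [H1 H2 /and3P [Hd Hs1 Hs2] ->]]]; rewrite Un_set2.
have [a /andP [a1 a2]] := common Hd.
rewrite inE (union_conn H1 H2 a1 a2) andbT; apply/imsetP => [[z _ Ez]].
have dc1 : down_closed J1 by move: H1; rewrite inE => /and3P [].
have dc2 : down_closed J2 by move: H2; rewrite inE => /and3P [].
have : z \in J1 :|: J2 by rewrite Ez inE.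
rewrite inE => /orP [zJ|zJ].
  by move/negP: Hs2; apply; apply: (subset_trans (subsetUr J1 J2)); rewrite Ez dn_sub.
by move/negP: Hs1; apply; apply: (subset_trans (subsetUl J1 J2)); rewrite Ez dn_sub.
Qed.

Lemma NP_Un J : J \in NP -> J \in Un @: Pi.
Proof.
rewrite inE => /andP [nP JC].
have := JC; rewrite inE => /and3P [J0 dcJ cJ].
have [x0 x0J] := set0Pn _ J0.
pose Pr := fun K => (K \in Jconn) && (K \proper J).
have P0 : Pr (dn x0).
  rewrite /Pr dn_conn /= properEneq dn_sub // andbT.
  by apply/eqP => E; move/imsetP: nP; apply; exists x0.
case: (arg_maxnP (fun K : {set T} => #|K|) P0) => K /andP [KC KJ] Kmax.
have := KC; rewrite inE => /and3P [K0 dcK cK].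
have [a aK] := set0Pn _ K0.
have [b bJ bK] : exists2 b, b \in J & b \notin K.
  by case/properP: KJ => _ [b]; exists b.
have [u [v [uK vJ vK]]] := cut cJ (proper_sub KJ) aK bJ bK.
move=> adj.
have uv : u < v.
  case/orP: adj => /andP [uv _] //.
  by move: vK; rewrite (down_closedP _ dcK v u uK (ltW uv)).
have L : K :|: dn v \in Jconn.
  by apply: (union_conn KC (dn_conn v) uK); rewrite inE ltW.
have EJ : K :|: dn v = J.
  apply/eqP; rewrite eqEsubset subUset (proper_sub KJ) dn_sub //=.
  apply: contraT => nsub.
  have sub1 : K :|: dn v \subset J by rewrite subUset (proper_sub KJ) dn_sub.
  have : Pr (K :|: dn v).
    rewrite /Pr L properEneq sub1 andbT /=; apply/negP => /eqP E.
    by move: nsub; rewrite E subxx.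

  move/Kmax => /= H; suff : (#|K| < #|K :|: dn v|)%N by rewrite ltnNge H.
  apply: proper_card; apply/properP; split.
    exact: subsetUl.
  by exists v; rewrite ?inE ?lexx ?orbT.
apply/imsetP; exists [set K; dn v]; last by rewrite Un_set2.
apply/PiP; exists K, (dn v); split => //; first exact: dn_conn.
apply/and3P; split.
- rewrite -setI_eq0; apply/set0Pn; exists u; rewrite !inE uK ltW //.
- apply/negP => Ksub; move/imsetP: nP; apply; exists v => //.
  by rewrite -EJ; apply/eqP; rewrite eqEsubset subUset Ksub subxx /= subsetUr.
- by apply/negP => /subsetP /(_ v); rewrite inE lexx => /(_ isT); apply/negP.
Qed.

Lemma NP_eq : NP = Un @: Pi.
Proof.
apply/setP => J; apply/idP/idP; first exact: NP_Un.
by case/imsetP => S SP ->; apply: Un_NP.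
Qed.

Lemma dn_inj : injective dn.
Proof.
move=> x y E; apply: le_anti.
have := in_set (fun z => z <= x) x; have := in_set (fun z => z <= y) y.
rewrite -/(dn x) -/(dn y) E => hy hx.
have : x \in dn y by rewrite -E inE.
have : y \in dn x by rewrite E inE.
by rewrite !inE => -> ->.
Qed.

Lemma card_Jconn : #|@Jconn d T| = #|T| + #|NP|.
Proof.
have sub : [set dn x | x : T] \subset Jconn.
  by apply/subsetP => J /imsetP [x _ ->]; apply: dn_conn.
rewrite -(cardsID [set dn x | x : T] Jconn) (setIidPr sub).
by rewrite card_imset ?cardsT //; exact: dn_inj.
Qed.

Lemma ci_inj : ci_poset T -> {in Pi &, injective Un}.
Proof.
rewrite /ci_poset card_Jconn NP_eq addnC => /addIn E.
by apply/imset_injP; rewrite E.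
Qed.

Lemma inj_ci : {in Pi &, injective Un} -> ci_poset T.
Proof.
move/imset_injP/eqP => E.
by rewrite /ci_poset card_Jconn NP_eq E addnC.
Qed.

End Gen.
Lemma connect_map (T1 T2 : finType) (e1 : rel T1) (e2 : rel T2) (f : T1 -> T2) x y :
  (forall u w, e1 u w -> connect e2 (f u) (f w)) -> connect e1 x y -> connect e2 (f x) (f y).
Proof.
move=> H /connectP [p]; elim: p x => [|z p IH] x /=; first by move=> _ ->.
by case/andP => exz pz eq; apply: connect_trans (H _ _ exz) (IH _ pz eq).
Qed.

Section Main.
Context {dP dQ : Order.disp_t} {P : finPOrderType dP} {Q : finPOrderType dQ}.

Definition Dn (i : Q -> P) (J : {set Q}) : {set P} := [set x | [exists u in J, x <= i u]].

Lemma preD (i : Q -> P) (hi : forall q q', (i q <= i q') = (q <= q')) J :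
  down_closed J -> i @^-1: Dn i J = J.
Proof.
move=> /down_closedP dc; apply/setP => q; rewrite !inE; apply/existsP/idP => [[u /andP [uJ le]]|qJ].
  by apply: dc uJ _; rewrite -hi.
by exists q; rewrite qJ lexx.
Qed.

Lemma D_conn (i : Q -> P) (hi : forall q q', (i q <= i q') = (q <= q')) J :
  J \in Jconn -> Dn i J \in Jconn.
Proof.
rewrite !inE => /and3P [J0 dcJ cJ].
have dc : down_closed (Dn i J).
  apply/down_closedP => x y; rewrite !inE => /existsP [u /andP [uJ yu]] xy.
  by apply/existsP; exists u; rewrite uJ (le_trans xy yu).
have iD : forall u, u \in J -> i u \in Dn i J.
  by move=> u uJ; rewrite inE; apply/existsP; exists u; rewrite uJ lexx.
rewrite /conn_ideal dc /=; apply/andP; split.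
  by have [u uJ] := set0Pn _ J0; apply/set0Pn; exists (i u); apply: iD.
have toi : forall x, x \in Dn i J -> exists2 u, u \in J & connect (hasse_rel (Dn i J)) x (i u).
  move=> x xD; have := xD; rewrite inE => /existsP [u /andP [uJ xu]].
  by exists u => //; apply: comp_conn => //; [exact: iD | rewrite xu].
have lift : forall u v, u \in J -> v \in J -> connect (hasse_rel (Dn i J)) (i u) (i v).
  move=> u v uJ vJ; apply: (connect_map (e1 := hasse_rel J)); last first.
    exact: (hasse_connectedP _ cJ).
  move=> a b /and3P [aJ bJ /hasse_adj_le ab]; apply: comp_conn => //; try exact: iD.
  by rewrite !hi.
apply/hasse_connectedP => x y xD yD.
have [u uJ xu] := toi x xD; have [v vJ yv] := toi y yD.
apply: (connect_trans xu); apply: (connect_trans (lift u v uJ vJ)).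
by rewrite sym_connect_sym; [exact: yv | exact: hasse_rel_sym].
Qed.

Lemma UnD (i : Q -> P) (S : {set {set Q}}) : Un (Dn i @: S) = Dn i (Un S).
Proof.
apply/setP => x; rewrite !inE; apply/existsP/existsP.
  case=> K /andP [/imsetP [J JS ->]]; rewrite inE => /existsP [u /andP [uJ xu]].
  by exists u; rewrite xu andbT inE; apply/existsP; exists J; rewrite JS.
case=> u /andP []; rewrite inE => /existsP [J /andP [JS uJ]] xu.
exists (Dn i J); rewrite imset_f //= inE; apply/existsP; exists u; rewrite uJ.
done.
Qed.

Lemma imset_set2 (A B : finType) (f : A -> B) a b : f @: [set a; b] = [set f a; f b].
Proof. by rewrite imsetU !imset_set1. Qed.

Lemma D_Pi (i : Q -> P) (hi : forall q q', (i q <= i q') = (q <= q')) S :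
  S \in Pi -> Dn i @: S \in Pi.
Proof.
case/PiP => J1 [J2 [H1 H2 /and3P [Hd Hs1 Hs2] ->]].
have dc1 : down_closed J1 by move: H1; rewrite inE => /and3P [].
have dc2 : down_closed J2 by move: H2; rewrite inE => /and3P [].
apply/PiP; exists (Dn i J1), (Dn i J2); split; try exact: D_conn.
  have [a /andP [a1 a2]] := common Hd.
  apply/and3P; split.
  - rewrite -setI_eq0; apply/set0Pn; exists (i a).
    by rewrite !inE; apply/andP; split; apply/existsP; exists a; rewrite lexx ?a1 ?a2.
  - apply: contra Hs1 => sub; rewrite -(preD hi dc1) -(preD hi dc2).
    exact: preimsetS.
  - apply: contra Hs2 => sub; rewrite -(preD hi dc1) -(preD hi dc2).
    exact: preimsetS.
exact: imset_set2.
Qed.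

Lemma inv_D (i : Q -> P) (hi : forall q q', (i q <= i q') = (q <= q')) S :
  S \in Pi -> (fun K : {set P} => i @^-1: K) @: (Dn i @: S) = S.
Proof.
case/PiP => J1 [J2 [H1 H2 _ ->]].
have dc1 : down_closed J1 by move: H1; rewrite inE => /and3P [].
have dc2 : down_closed J2 by move: H2; rewrite inE => /and3P [].
by rewrite !imset_set2 !preD.
Qed.

End Main.

Theorem corollary10p3 (dP dQ : Order.disp_t) (P : finPOrderType dP)
    (Q : finPOrderType dQ) (i : Q -> P) :
  injective i ->
  (forall q q' : Q, (i q <= i q') = (q <= q')) ->
  ci_poset P -> ci_poset Q.
Proof.
move=> _ hi /ci_inj hP; apply: inj_ci => S1 S2 H1 H2 E.
have E' : Dn i @: S1 = Dn i @: S2.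
  by apply: hP; rewrite ?(D_Pi hi) // !UnD E.
by rewrite -(inv_D hi H1) -(inv_D hi H2) E'.
Qed.
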